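(* Let $\mathcal A$ be a finite set and $\pi^{\mathrm{ref}}\in\Delta(\mathcal A)$ with $\min_{a\in\mathcal A}\pi^{\mathrm{ref}}(a)=\alpha>0$. Then the map $\pi\mapsto\mathrm{KL}(\pi^{\mathrm{ref}}\|\pi)$, viewed as a map from the relative interior $\mathrm{ri}(\Delta(\mathcal A))$ to $\mathbb R_+$, is $\Theta(\alpha)$-strongly convex with respect to the $L^1$ distance.
   Context: $\mathrm{KL}(P\|Q)=\sum_aP(a)\log(P(a)/Q(a))$. $\mathrm{ri}(\Delta(\mathcal A))$ is the set of probability vectors with all entries strictly positive. $\Theta(\alpha)$ means the strong convexity modulus is a constant multiple of $\alpha$ (absolute constant). *)

(* Defs.v *)
From mathcomp Require Import all_boot all_order all_algebra.
From mathcomp Require Import all_classical all_reals exp.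
Set Implicit Arguments. Unset Strict Implicit. Unset Printing Implicit Defensive.
Import Order.TTheory GRing.Theory Num.Theory.
Local Open Scope ring_scope.

Section Defs.
Variables (R : realType) (A : finType).

Definition in_simplex (p : A -> R) : Prop :=
  (forall a, 0 <= p a) /\ \sum_(a : A) p a = 1.

Definition in_ri_simplex (p : A -> R) : Prop :=
  (forall a, 0 < p a) /\ \sum_(a : A) p a = 1.

Definition KL (P Q : A -> R) : R :=
  \sum_(a : A) P a * ln (P a / Q a).

Definition L1dist (p q : A -> R) : R := \sum_(a : A) `|p a - q a|.

Definition strongly_convex_L1 (D : (A -> R) -> Prop) (f : (A -> R) -> R)
    (mu : R) : Prop :=
  forall (x y : A -> R) (t : R), D x -> D y -> 0 <= t <= 1 ->
    f (fun a => t * x a + (1 - t) * y a)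
    <= t * f x + (1 - t) * f y - mu / 2 * t * (1 - t) * (L1dist x y) ^+ 2.

End Defs.

(* Main.v *)
Require Import Defs.
From mathcomp Require Import all_boot all_order all_algebra.
From mathcomp Require Import all_classical all_reals exp.
From mathcomp Require Import lra ring.
Import Order.TTheory GRing.Theory Num.Theory.
Local Open Scope ring_scope.

Lemma ln_le_sub (R : realType) (a r : R) : 0 < a -> 0 < r ->
  ln a - ln r <= a / r - 1.
Proof.
move=> a0 r0.
have ar0 : 0 < a / r by rewrite divr_gt0.
rewrite -ln_div ?posrE //.
have := expR_ge1Dx (ln (a / r)).
rewrite lnK ?posrE //; lra.
Qed.

Lemma coord (R : realType) (x y t : R) : 0 < x -> 0 < y -> x + y <= 2 ->
  0 <= t -> t <= 1 ->
  t * (1 - t) / 4 * ((x - y) ^+ 2 / (x + y)) <=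
  ln (t * x + (1 - t) * y) - t * ln x - (1 - t) * ln y.
Proof.
move=> x0 y0 S2 t0 t1.
have m0 : 0 < t * x + (1 - t) * y by nra.
set a : R := Num.sqrt x; set b : R := Num.sqrt y; set r : R := Num.sqrt (t * x + (1 - t) * y).
have a0 : 0 < a by rewrite sqrtr_gt0.
have b0 : 0 < b by rewrite sqrtr_gt0.
have r0 : 0 < r by rewrite sqrtr_gt0.
have ea : x = a * a by rewrite -expr2 sqr_sqrtr // ltW.
have eb : y = b * b by rewrite -expr2 sqr_sqrtr // ltW.
have er : t * x + (1 - t) * y = r * r by rewrite -expr2 sqr_sqrtr // ltW.
have h1 := @ln_le_sub R _ _ a0 r0.
have h2 := @ln_le_sub R _ _ b0 r0.
have -> : ln (t * x + (1 - t) * y) - t * ln x - (1 - t) * ln y =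
   2 * (t * (ln r - ln a) + (1 - t) * (ln r - ln b)).
  by rewrite er {1}ea {1}eb !lnM ?posrE //; ring.
set La := ln r - ln a. set Lb := ln r - ln b.
have hLa : r - a <= r * La.
  have : r * (ln a - ln r) <= r * (a / r - 1) by rewrite ler_pM2l.
  have -> : r * (a / r - 1) = a - r by field; rewrite gt_eqF.
  rewrite /La mulrBr; lra.
have hLb : r - b <= r * Lb.
  have : r * (ln b - ln r) <= r * (b / r - 1) by rewrite ler_pM2l.
  have -> : r * (b / r - 1) = b - r by field; rewrite gt_eqF.
  rewrite /Lb mulrBr; lra.
set E := t * La + (1 - t) * Lb.
set w := t * a + (1 - t) * b.
have w0 : 0 <= w by rewrite /w; nra.
have rw2 : r * r - w * w = t * (1 - t) * (a - b) ^+ 2.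
  by rewrite -er ea eb /w; ring.
have wr : w <= r.
  have : 0 <= r * r - w * w by rewrite rw2; apply: mulr_ge0; [nra| apply: sqr_ge0].
  nra.
have hE : r - w <= r * E.
  rewrite /E /w.
  have : t * (r - a) <= t * (r * La) by rewrite ler_wpM2l.
  have : (1 - t) * (r - b) <= (1 - t) * (r * Lb) by rewrite ler_wpM2l // subr_ge0.
  lra.
have E0 : 0 <= E.
  have : 0 <= r * E by lra.
  by rewrite pmulr_rge0.
have -> : t * (1 - t) / 4 * ((x - y) ^+ 2 / (x + y)) =
   (t * (1 - t) * (x - y) ^+ 2) / (4 * (x + y)).
  by field; apply/negP => /eqP; lra.
rewrite ler_pdivrMr; last lra.
set S := x + y.
have key : t * (1 - t) * (x - y) ^+ 2 = (r * r - w * w) * (a + b) ^+ 2.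
  by rewrite rw2 ea eb; ring.
rewrite key.
have rS : r * r <= S by rewrite -er /S; nra.
have ab2 : (a + b) ^+ 2 <= 2 * S.
  rewrite /S ea eb; have := sqr_ge0 (a - b); rewrite !expr2; lra.
have step1 : r * ((r * r - w * w) * (a + b) ^+ 2) <= (r - w) * (2 * (r * r)) * (2 * S).
  have e : r * ((r * r - w * w) * (a + b) ^+ 2) = (r - w) * (r * (r + w)) * (a + b) ^+ 2 by ring.
  rewrite e.
  apply: ler_pM; first by apply: mulr_ge0; nra.
  - by apply: sqr_ge0.
  - apply: ler_wpM2l; nra.
  - done.
have step2 : (r - w) * (2 * (r * r)) * (2 * S) <= r * (2 * E * (4 * S)).
  have S0 : 0 < S by rewrite /S; lra.
  have e : r * (2 * E * (4 * S)) = 4 * (r * E) * (2 * S) by ring.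
  rewrite e; apply: ler_wpM2r; first lra.
  have : (r - w) * (r * r) <= (r - w) * S by apply: ler_wpM2l; lra.
  have : (r - w) * S <= (r - w) * 2 by apply: ler_wpM2l; [lra | exact: S2].
  have : (r - w) * 2 <= (r * E) * 2 by apply: ler_wpM2r.
  lra.
have := le_trans step1 step2.
by rewrite ler_pM2l.
Qed.

Lemma cs2 (R : realType) (I : finType) (d S : I -> R) :
  (forall i, 0 < S i) -> \sum_i S i = 2 ->
  (\sum_i `|d i|) ^+ 2 <= 2 * \sum_i (d i ^+ 2 / S i).
Proof.
move=> S0 ST.
set L := \sum_i `|d i|. set Q := \sum_i (d i ^+ 2 / S i).
have L0 : 0 <= L by apply: sumr_ge0 => i _.
have per : forall i, 2 * L * 2 * `|d i| <= L ^+ 2 * S i + 4 * (d i ^+ 2 / S i).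
  move=> i.
  have Si := S0 i.
  have eq : d i ^+ 2 / S i * S i = `|d i| ^+ 2.
    by rewrite -mulrA mulVf ?gt_eqF // mulr1 real_normK // num_real.
  set q := d i ^+ 2 / S i in eq *.
  set e := `|d i| in eq *.
  have sq := sqr_ge0 (L * S i - 2 * e).
  rewrite -(ler_pM2r Si).
  have : 0 <= (L * S i - 2 * e) ^+ 2 by [].
  rewrite !expr2 in eq *.
  nra.
have h : \sum_i (2 * L * 2 * `|d i|) <= \sum_i (L ^+ 2 * S i + 4 * (d i ^+ 2 / S i)).
  by apply: ler_sum => i _; exact: per.
move: h; rewrite big_split /= -!mulr_sumr ST -/L -/Q => h.
have : L ^+ 2 * 2 <= 4 * Q by rewrite !expr2 in h *; lra.
lra.
Qed.

Lemma le_sum1 (R : realType) (A : finType) (x : A -> R) a :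
  (forall i, 0 <= x i) -> \sum_i x i = 1 -> x a <= 1.
Proof.
move=> x0 s1; rewrite -s1 (bigD1 a) //= lerDl.
by apply: sumr_ge0 => i _.
Qed.

Theorem lemma5p1 (R : realType) :
  exists c : R, 0 < c /\
  forall (A : finType) (pref : A -> R) (alpha : R),
    in_simplex pref ->
    (forall a, alpha <= pref a) -> (exists a, pref a = alpha) ->
    0 < alpha ->
    strongly_convex_L1 (@in_ri_simplex R A) (fun pi => KL pref pi) (c * alpha).
Proof.
exists (1/4); split; first lra.
move=> A p al [p0 p1] hal _ al0 x y t [x0 x1] [y0 y1] /andP[t0 t1].
rewrite /KL /L1dist.
set m := fun a => t * x a + (1 - t) * y a.
have m0 : forall a, 0 < m a by move=> a; rewrite /m; have := x0 a; have := y0 a; nra.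
have pp : forall a, 0 < p a by move=> a; exact: lt_le_trans (hal a).
set B := fun a => ln (m a) - t * ln (x a) - (1 - t) * ln (y a).
have eq : t * (\sum_a p a * ln (p a / x a)) + (1 - t) * (\sum_a p a * ln (p a / y a))
   = \sum_a p a * ln (p a / m a) + \sum_a p a * B a.
  rewrite !mulr_sumr -!big_split; apply: eq_bigr => a _ /=.
  rewrite /B !ln_div ?posrE //; ring.
rewrite eq.
set L := \sum_a `|x a - y a|.
set Q := \sum_a ((x a - y a) ^+ 2 / (x a + y a)).
have hQ : L ^+ 2 <= 2 * Q.
  apply: cs2 => [a|]; first by have := x0 a; have := y0 a; lra.
  by rewrite big_split /= x1 y1.
have hB : forall a, al * (t * (1 - t) / 4 * ((x a - y a) ^+ 2 / (x a + y a))) <= p a * B a.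
  move=> a.
  have c := @coord R (x a) (y a) t (x0 a) (y0 a).
  have xa := @le_sum1 R A x a (fun i => ltW (x0 i)) x1.
  have ya := @le_sum1 R A y a (fun i => ltW (y0 i)) y1.
  have {}c := c ltac:(lra) t0 t1.
  apply: ler_pM; first exact: ltW.
  - apply: mulr_ge0; first by apply: mulr_ge0; [nra | lra].
    apply: divr_ge0; first exact: sqr_ge0.
    by have := x0 a; have := y0 a; lra.
  - exact: hal.
  - exact: c.
have hs : \sum_a al * (t * (1 - t) / 4 * ((x a - y a) ^+ 2 / (x a + y a)))
    <= \sum_a p a * B a by apply: ler_sum => a _; exact: hB.
move: hs; rewrite -mulr_sumr -mulr_sumr -/Q => hs.
have tt : 0 <= t * (1 - t) by nra.
have : al * (t * (1 - t)) * (L ^+ 2) <= al * (t * (1 - t)) * (2 * Q).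
  by apply: ler_wpM2l => //; apply: mulr_ge0 => //; exact: ltW.
nra.
Qed.
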